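(* Let $A$ be a nilpotent non-abelian finite-dimensional Leibniz algebra over a field whose center $Z_1(A)=\{z\in A: zA=Az=0\}$ is one-dimensional. Then there is no nilpotent Leibniz algebra $N$ and integer $i\ge 2$ with $A=N^i$.
   Context: A (left) Leibniz algebra is an algebra satisfying $x(yz)=(xy)z+y(xz)$ for all $x,y,z$. The lower central series of $N$ is $N^1=N$, $N^{j+1}=NN^j$; $N$ is nilpotent if $N^t=0$ for some $t$. $A$ is abelian if $AA=0$. *)

(* Defs.v *)
From HB Require Import structures.
From mathcomp Require Import all_boot all_order all_algebra.
Set Implicit Arguments. Unset Strict Implicit. Unset Printing Implicit Defensive.
Import GRing.Theory.
Local Open Scope ring_scope.

Definition leibniz_alg (K : fieldType) (V : lmodType K) (mul : V -> V -> V) : Prop :=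
  [/\ (forall (a : K) x y z, mul (a *: x + y) z = a *: mul x z + mul y z),
      (forall (a : K) x y z, mul x (a *: y + z) = a *: mul x y + mul x z)
    & (forall x y z, mul x (mul y z) = mul (mul x y) z + mul y (mul x z))].

(* Lower central series: lcs mul j x  <->  x \in N^j (j >= 1),
   N^1 = N, N^(j+1) = span { x y : x \in N, y \in N^j }. *)
Inductive lcs (K : fieldType) (V : lmodType K) (mul : V -> V -> V) : nat -> V -> Prop :=
| lcs_one x : lcs mul 1 x
| lcs_mul j x y : lcs mul j y -> lcs mul j.+1 (mul x y)
| lcs_zero j : lcs mul j.+1 0
| lcs_add j x y : lcs mul j.+1 x -> lcs mul j.+1 y -> lcs mul j.+1 (x + y)
| lcs_scale j (a : K) x : lcs mul j.+1 x -> lcs mul j.+1 (a *: x).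

Definition nilpotent_alg (K : fieldType) (V : lmodType K) (mul : V -> V -> V) : Prop :=
  exists t : nat, forall x, lcs mul t.+1 x -> x = 0.

Definition abelian_alg (K : fieldType) (V : lmodType K) (mul : V -> V -> V) : Prop :=
  forall x y, mul x y = 0.

Definition central (K : fieldType) (V : lmodType K) (mul : V -> V -> V) (z : V) : Prop :=
  forall x, mul z x = 0 /\ mul x z = 0.

Definition center_dim1 (K : fieldType) (V : lmodType K) (mul : V -> V -> V) : Prop :=
  exists2 z : V, z != 0 & forall x, central mul x <-> exists c : K, x = c *: z.

(* (A, mulA) is isomorphic, as an algebra, to N^i with the restricted product:
   there is an injective linear multiplicative map f : A -> N with image N^i. *)
Definition iso_to_lcs (K : fieldType) (A : lmodType K) (mulA : A -> A -> A)
    (N : lmodType K) (mulN : N -> N -> N) (i : nat) : Prop :=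
  exists f : A -> N,
    [/\ (forall (a : K) x y, f (a *: x + y) = a *: f x + f y),
        injective f,
        (forall x y, f (mulA x y) = mulN (f x) (f y))
      & (forall n, lcs mulN i n <-> exists x, n = f x)].

(* Main.v *)
Require Import Defs.
From HB Require Import structures.
From Stdlib Require Import Classical.
From mathcomp Require Import all_boot all_order all_algebra.
From mathcomp Require Import zify.
Set Implicit Arguments. Unset Strict Implicit. Unset Printing Implicit Defensive.
Import GRing.Theory.
Local Open Scope ring_scope.

Section Aux.
Variables (K : fieldType) (V : lmodType K) (mul : V -> V -> V).
Hypothesis HL : leibniz_alg mul.

Lemma mul0l z : mul 0 z = 0.
Proof.
case: HL => H1 _ _; have h := H1 1 0 0 z; rewrite !scale1r addr0 in h.
by apply: (@addrI _ (mul 0 z)); rewrite addr0 -h.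
Qed.

Lemma mulDl x y z : mul (x + y) z = mul x z + mul y z.
Proof. by case: HL => H1 _ _; have h := H1 1 x y z; rewrite !scale1r in h. Qed.

Lemma mulZl (a : K) x z : mul (a *: x) z = a *: mul x z.
Proof. by case: HL => H1 _ _; rewrite -[a *: x]addr0 H1 mul0l addr0. Qed.

Lemma lcs_opp j x : lcs mul j.+1 x -> lcs mul j.+1 (- x).
Proof. by move=> h; rewrite -scaleN1r; apply: lcs_scale. Qed.

Lemma lcs_prod a x : lcs mul a x -> forall b y, lcs mul b y -> lcs mul (a + b) (mul x y).
Proof.
elim=> {a x}.
- by move=> x b y hy; rewrite add1n; apply: lcs_mul.
- move=> j u v _ IH b y hy.
  have E : mul (mul u v) y = mul u (mul v y) - mul v (mul u y).
    by case: HL => _ _ H3; rewrite H3 addrK.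
  rewrite E addSn; apply: lcs_add.
    by apply: lcs_mul; apply: IH.
  by apply: lcs_opp; have := IH b.+1 (mul u y) (lcs_mul u hy); rewrite addnS.
- by move=> j b y _; rewrite mul0l addSn; apply: lcs_zero.
- move=> j x1 x2 _ IH1 _ IH2 b y hy; rewrite mulDl addSn; apply: lcs_add.
    by have := IH1 b y hy; rewrite addSn.
  by have := IH2 b y hy; rewrite addSn.
- move=> j c x _ IH b y hy; rewrite mulZl addSn; apply: lcs_scale.
  by have := IH b y hy; rewrite addSn.
Qed.

Lemma lcs_mono1 n x : lcs mul n x -> (1 <= n.-1)%N -> lcs mul n.-1 x.
Proof.
elim=> {n x} //=.
- move=> j x y _ IH Hj; case: j IH Hj => [|[|j]] IH Hj //.
  + by apply: lcs_one.
  + by apply: lcs_mul; apply: IH.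
- by move=> [|j] // _; apply: lcs_zero.
- move=> [|j] x y _ IH1 _ IH2 Hj //; apply: lcs_add; [exact: IH1|exact: IH2].
- move=> [|j] c x _ IH Hj //; apply: lcs_scale; exact: IH.
Qed.

Lemma lcs_mono m x : lcs mul m x -> forall n, (n <= m)%N -> (1 <= n)%N -> lcs mul n x.
Proof.
elim: m x => [|m IH] x h n Hnm Hn; first by move: Hnm Hn; lia.
case: (ltnP n m.+1) => hn; last by have -> : n = m.+1 by lia.
apply: IH; [|exact: hn|exact: Hn].
by apply: (lcs_mono1 h) => /=; lia.
Qed.

Lemma lcs_step j : (0 < j)%N -> (forall y, lcs mul j y -> lcs mul j.+1 y) ->
  forall x, lcs mul j.+1 x -> lcs mul j.+2 x.
Proof.
move=> j0 H x h; move Ej: j.+1 h => m h; elim: h j j0 Ej H => {m x}.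
- by move=> x [|j] //= _ [].
- by move=> j' x y hy _ j _ [E] H; subst; apply: lcs_mul; apply: H.
- by move=> j' j _ [E] _; subst; apply: lcs_zero.
- by move=> j' x y _ I1 _ I2 j j0 [E] H; subst; apply: lcs_add; [exact: (I1 _ j0 erefl H)|exact: (I2 _ j0 erefl H)].
- by move=> j' c x _ I j j0 [E] H; subst; apply: lcs_scale; exact: (I _ j0 erefl H).
Qed.

End Aux.

Lemma find_max (P : nat -> Prop) t n0 : P n0 -> (forall j, P j -> (j <= t)%N) ->
  exists k, [/\ P k, ~ P k.+1 & (n0 <= k)%N].
Proof.
move=> H0 Hb; move Hd: (t - n0)%N => d; elim: d n0 H0 Hd => [|d IH] n0 H0 Hd.
  exists n0; split=> // h; have := Hb _ h; have := Hb _ H0; move: Hd; lia.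
case: (classic (P n0.+1)) => h.
  have [k [? ? ?]] := IH _ h ltac:(move: Hd; lia).
  by exists k; split=> //; lia.
by exists n0.
Qed.

Theorem mainTheorem15 (K : fieldType) (A : vectType K) (mulA : A -> A -> A) :
  leibniz_alg mulA -> nilpotent_alg mulA -> ~ abelian_alg mulA ->
  center_dim1 mulA ->
  ~ (exists (N : lmodType K) (mulN : N -> N -> N) (i : nat),
       [/\ leibniz_alg mulN, nilpotent_alg mulN, (2 <= i)%N
         & iso_to_lcs mulA mulN i]).
Proof.
move=> _ _ Hna [c c0 Hc] [N [mulN [i [HL [t Ht] Hi [f [Hlin Hinj Hmul Himg]]]]]].
have f0 : f 0 = 0.
  have h := Hlin 1 0 0; rewrite !scale1r addr0 in h.
  by apply: (@addrI _ (f 0)); rewrite addr0 -h.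
have fZ a x : f (a *: x) = a *: f x by rewrite -[a *: x]addr0 Hlin f0 addr0.
have inA x : lcs mulN i (f x) by apply/Himg; exists x.
have [x [y Hxy]] : exists x y, mulA x y <> 0.
  apply: NNPP => h; apply: Hna => x y; apply: NNPP => h'; apply: h; by exists x, y.
pose P j := exists n, n <> 0 /\ lcs mulN j n.
have P2i : P (i + i)%N.
  exists (mulN (f x) (f y)); split; last by apply: lcs_prod.
  by rewrite -Hmul => h; apply: Hxy; apply: Hinj; rewrite h f0.
have Pb j : P j -> (j <= t)%N.
  move=> [n [nz hn]]; case: (leqP j t) => // hj; exfalso; apply: nz; apply: Ht.
  by apply: (lcs_mono hn).
have [k [[z [z0 hz]] nPk ik]] := find_max P2i Pb.
have zero1 n : lcs mulN k.+1 n -> n = 0.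
  by move=> h; apply: NNPP => h'; apply: nPk; exists n.
case: k hz nPk ik zero1 => [|k] hz nPk ik zero1; first by move: ik Hi; lia.
have [w [hw nw]] : exists w, lcs mulN k w /\ ~ lcs mulN k.+1 w.
  apply: NNPP => h; apply: z0; apply: zero1.
  apply: lcs_step; [by move: ik Hi; lia| |exact: hz] => w hw; apply: NNPP => h'; apply: h; by exists w.
have centr n : (k <= n)%N -> forall v, lcs mulN n (f v) -> central mulA v.
  move=> hn v hv u; split; apply: Hinj; rewrite Hmul f0; apply: zero1.
    by apply: (lcs_mono (lcs_prod HL hv (inA u))); move: hn Hi ik; lia.
  by apply: (lcs_mono (lcs_prod HL (inA u) hv)); move: hn Hi ik; lia.
have [z' ez] : exists z', z = f z'.
  by apply/Himg; apply: (lcs_mono hz); move: Hi ik; lia.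
have [w' ew] : exists w', w = f w'.
  by apply/Himg; apply: (lcs_mono hw); move: Hi ik; lia.
subst z w.
have [b eb] := (Hc z').1 (centr k.+1 (leqnSn _) _ hz).
have [a ea] := (Hc w').1 (centr k (leqnn _) _ hw).
have b0 : b != 0.
  by apply/eqP => hb; apply: z0; rewrite eb hb scale0r f0.
apply: nw; have -> : w' = (a / b) *: z'.
  by rewrite eb scalerA mulfVK // ea.
by rewrite fZ; apply: lcs_scale.
Qed.
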